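(* Let $R$ be a commutative ring with identity. If $\gamma_t(\Gamma(R)) = 2$ and $R$ is not isomorphic to $\mathbb{Z}_2\times D$ for any integral domain $D$, then $\gamma_t(\Gamma(R)) = \gamma(\Gamma(R))$.
   Context: All rings are commutative with identity. $Z(R)^*$ is the set of nonzero zero-divisors. The zero-divisor graph $\Gamma(R)$ has vertex set $Z(R)^*$; distinct $r,s$ are adjacent iff $rs=0$, and $x$ is adjacent to itself iff $x^2=0$. A dominating set is $X\subseteq Z(R)^*$ such that every vertex not in $X$ is adjacent to some element of $X$; a total dominating set is $X$ such that every vertex (including those in $X$) is adjacent to some element of $X$ (self-adjacency counts). $\gamma$ and $\gamma_t$ denote the respective minimum cardinalities. *)

(* Defs.v *)
From HB Require Import structures.
From mathcomp Require Import all_boot all_order all_algebra.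
Set Implicit Arguments. Unset Strict Implicit. Unset Printing Implicit Defensive.
Import GRing.Theory.
Local Open Scope ring_scope.

Section ZeroDivisorGraph.
Variable R : comPzRingType.

Definition zdiv_star (x : R) : Prop :=
  x != 0 /\ exists y : R, y != 0 /\ x * y = 0.

(* Adjacency in Gamma(R) between vertices x, y (distinct: xy = 0;
   equal: x^2 = 0 -- both cases are x * y = 0). *)
Definition zd_adj (x y : R) : Prop := x * y = 0.

Definition zd_dominating (X : R -> Prop) : Prop :=
  (forall x, X x -> zdiv_star x) /\
  (forall v, zdiv_star v -> ~ X v -> exists x, X x /\ zd_adj v x).

(* Total dominating set of Gamma(R) (self-adjacency counts). *)
Definition zd_total_dominating (X : R -> Prop) : Prop :=
  (forall x, X x -> zdiv_star x) /\
  (forall v, zdiv_star v -> exists x, X x /\ zd_adj v x).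

(* The minimum cardinality of a set satisfying P equals n:
   some n-element set satisfies P, and every set satisfying P has at least
   n elements (sets with fewer than n elements are finite, hence given by a
   sequence). *)
Definition min_card_is (P : (R -> Prop) -> Prop) (n : nat) : Prop :=
  (exists s : seq R, uniq s /\ size s = n /\ P (fun x => x \in s)) /\
  (forall s : seq R, P (fun x => x \in s) -> (n <= size (undup s))%N).

Definition gamma_is (n : nat) : Prop := min_card_is zd_dominating n.
Definition gamma_t_is (n : nat) : Prop := min_card_is zd_total_dominating n.

End ZeroDivisorGraph.

(* Main.v *)
Require Import Defs.
From HB Require Import structures.
From mathcomp Require Import all_boot all_order all_algebra.
From Stdlib Require Import ClassicalEpsilon.
Set Implicit Arguments. Unset Strict Implicit. Unset Printing Implicit Defensive.
Import GRing.Theory.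
Local Open Scope ring_scope.

Record good (R : comPzRingType) (x : R) : Prop := Good {
  g_idem : x * x = x;
  g_x0 : x != 0;
  g_x1 : 1 - x != 0;
  g_two : forall r, r * x = 0 \/ r * x = x;
  g_dom : forall a b, a * x = 0 -> b * x = 0 -> a * b = 0 -> a = 0 \/ b = 0 }.

Lemma good_of (R : comPzRingType) (y : R) :
  zdiv_star y -> (forall v, zdiv_star v -> v != y -> v * y = 0) -> y * y != 0 -> good y.
Proof.
move=> [y0 [z [z0 yz]]] key yy0.
have idem : y * y = y.
  apply/eqP; apply/negP => /negP hne.
  have s2 : zdiv_star (y * y).
    by split => //; exists z; split => //; rewrite -mulrA yz mulr0.
  have y3 : y * y * y = 0 := key _ s2 hne.
  have e1 : (y + y * y) * y = y * y by rewrite mulrDl y3 addr0.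
  have t : zdiv_star (y + y * y).
    split.
      apply/eqP => h; move: e1; rewrite h mul0r => /esym/eqP; by rewrite (negbTE yy0).
    exists (y * y); split => //.
    by rewrite mulrDl mulrA y3 [y * y * _]mulrA y3 mul0r addr0.
  have ne : y + y * y != y.
    apply/eqP => h; move: yy0; rewrite -{4}[y]addr0 in h.
    by move/addrI: h => ->; rewrite eqxx.
  by move: (key _ t ne); rewrite e1 => /eqP; rewrite (negbTE yy0).
have x1 : 1 - y != 0.
  apply/eqP => /eqP; rewrite subr_eq0 => /eqP h.
  by move: yz; rewrite -h mul1r => /eqP; rewrite (negbTE z0).
split => //.
  move=> r; have [r0|r0] := eqVneq (r * y) 0; first by left.
  have [ry|ry] := eqVneq (r * y) y; first by right.
  exfalso.
  have s : zdiv_star (r * y).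
    split => //; exists (1 - y); split => //.
    by rewrite -mulrA mulrBr mulr1 idem subrr mulr0.
  by move: (key _ s ry); rewrite -mulrA idem => /eqP; rewrite (negbTE r0).
move=> a b ay by_ ab.
have [a0|a0] := eqVneq a 0; first by left.
have [b0|b0] := eqVneq b 0; first by right.
exfalso.
have e1 : (a + y) * y = y by rewrite mulrDl ay add0r idem.
have t : zdiv_star (a + y).
  split.
    by apply/eqP => h; move: e1; rewrite h mul0r => /esym/eqP; rewrite (negbTE y0).
  by exists b; split => //; rewrite mulrDl ab add0r mulrC.
have ne : a + y != y.
  apply/eqP => h; move: a0; rewrite -{2}[y]add0r in h.
  by move/addIr: h => ->; rewrite eqxx.
by move: (key _ t ne); rewrite e1 => /eqP; rewrite (negbTE y0).
Qed.
Definition Dty (R : comPzRingType) (x : R) of good x := {y : R | y * x == 0}.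

Section Cons.
Variables (R : comPzRingType) (x : R) (H : good x).
Local Notation D := (Dty H).
HB.instance Definition _ := Choice.copy D {y : R | y * x == 0}.

Definition dv (a : D) : R := proj1_sig a.
Lemma dvP (a : D) : dv a * x = 0.
Proof. by apply/eqP; case: a. Qed.
Lemma dinj : injective dv.
Proof.
move=> [a Ha] [b Hb] /= e; rewrite /dv /= in e; subst b.
by rewrite (eq_irrelevance Ha Hb).
Qed.
Definition mk (y : R) (Hy : y * x = 0) : D := exist _ y (introT eqP Hy).

Lemma z_P : 0 * x = 0 :> R. Proof. by rewrite mul0r. Qed.
Definition dzero := mk z_P.
Lemma add_P (a b : D) : (dv a + dv b) * x = 0.
Proof. by rewrite mulrDl !dvP addr0. Qed.
Definition dadd a b := mk (add_P a b).
Lemma opp_P (a : D) : (- dv a) * x = 0.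
Proof. by rewrite mulNr dvP oppr0. Qed.
Definition dopp a := mk (opp_P a).
Lemma mul_P (a b : D) : (dv a * dv b) * x = 0.
Proof. by rewrite -mulrA dvP mulr0. Qed.
Definition dmul a b := mk (mul_P a b).
Lemma one_P : (1 - x) * x = 0.
Proof. by rewrite mulrBl mul1r (g_idem H) subrr. Qed.
Definition done_ := mk one_P.

Lemma daddA : associative dadd.
Proof. by move=> a b c; apply: dinj; rewrite /= addrA. Qed.
Lemma daddC : commutative dadd.
Proof. by move=> a b; apply: dinj; rewrite /= addrC. Qed.
Lemma dadd0 : left_id dzero dadd.
Proof. by move=> a; apply: dinj; rewrite /= add0r. Qed.
Lemma daddN : left_inverse dzero dopp dadd.
Proof. by move=> a; apply: dinj; rewrite /= addNr. Qed.
HB.instance Definition _ := GRing.isZmodule.Build D daddA daddC dadd0 daddN.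

Lemma dmulA : associative dmul.
Proof. by move=> a b c; apply: dinj; rewrite /= mulrA. Qed.
Lemma dmulC : commutative dmul.
Proof. by move=> a b; apply: dinj; rewrite /= mulrC. Qed.
Lemma dmul1 : left_id done_ dmul.
Proof.
move=> a; apply: dinj; rewrite /= /dv /= mulrBl mul1r.
by rewrite mulrC (eqP (proj2_sig a)) subr0.
Qed.
Lemma dmulD : left_distributive dmul dadd.
Proof. by move=> a b c; apply: dinj; rewrite /= mulrDl. Qed.
Lemma done_neq0 : done_ != dzero.
Proof. by apply/eqP => /(congr1 dv) /= /eqP; rewrite (negbTE (g_x1 H)). Qed.
HB.instance Definition _ := GRing.Zmodule_isComNzRing.Build D dmulA dmulC dmul1 dmulD done_neq0.

Definition dunit : pred D := fun a =>
  if excluded_middle_informative (exists b : D, b * a = 1) then true else false.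
Definition dinv (a : D) : D :=
  match excluded_middle_informative (exists b : D, b * a = 1) with
  | left h => proj1_sig (constructive_indefinite_description _ h)
  | right _ => a end.
Lemma dmulV : {in dunit, left_inverse 1 dinv *%R}.
Proof.
move=> a; rewrite unfold_in /dunit /dinv.
case: excluded_middle_informative => // h _.
by case: constructive_indefinite_description.
Qed.
Lemma dunitPl : forall a b : D, b * a = 1 -> dunit a.
Proof.
move=> a b e; rewrite /dunit; case: excluded_middle_informative => // [[]].
by exists b.
Qed.
Lemma dinv_out : {in [predC dunit], dinv =1 id}.
Proof.
move=> a Ha; rewrite /dinv; case: excluded_middle_informative => // [[b hb]].
move: Ha; rewrite inE /= => /negP[]; exact: (dunitPl hb).
Qed.
HB.instance Definition _ := GRing.ComNzRing_hasMulInverse.Build D dmulV dunitPl dinv_out.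

Lemma ddom : GRing.integral_domain_axiom D.
Proof.
move=> a b /(congr1 dv) /= e.
have [a0|b0] := g_dom H (dvP a) (dvP b) e.
  by apply/orP; left; apply/eqP; apply: dinj.
by apply/orP; right; apply/eqP; apply: dinj.
Qed.
HB.instance Definition _ := GRing.ComUnitRing_isIntegral.Build D ddom.

End Cons.


Section Map.
Variables (R : comPzRingType) (x : R) (H : good x).
Local Notation D := (Dty H).

Lemma xx0 : x + x = 0.
Proof.
have [] := g_two H (1 + 1); rewrite mulrDl mul1r // => e.
have := g_x0 H; rewrite -{3}[x]addr0 in e.
by move/addrI: e => ->; rewrite eqxx.
Qed.

Lemma fP (r : R) : r * (1 - x) * x = 0.
Proof. by rewrite -mulrA (one_P H) mulr0. Qed.

Definition fmap (r : R) : ('Z_2 * D)%type := ((r * x != 0)%:R, mk H (fP r)).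

Lemma z2a : (true%:R : 'Z_2) = 1. Proof. by []. Qed.
Lemma z2b : (1 : 'Z_2) - 1 = 0. Proof. by rewrite subrr. Qed.
Lemma z2c : (0 : 'Z_2) - 1 = 1. Proof. by apply/eqP. Qed.

Lemma fmapB : zmod_morphism fmap.
Proof.
move=> a b; rewrite /fmap; congr (_, _).
  rewrite mulrBl.
  have [] := g_two H a => ->; have [] := g_two H b => ->;
    rewrite ?subrr ?eqxx ?sub0r ?subr0 ?oppr_eq0 ?(negbTE (g_x0 H)) /= ?subrr //.
  by apply/eqP.
by apply: dinj; rewrite /= /dv /= mulrBl.
Qed.

Lemma fmapM : multiplicative fmap.
Proof.
split.
  move=> a b; rewrite /fmap; congr (_, _).
    rewrite -mulrA; have [] := g_two H b => ->; rewrite ?mulr0 ?eqxx /= ?mulr0 //.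
    by rewrite (negbTE (g_x0 H)) /= mulr1.
  have e : (1 - x) * (1 - x) = 1 - x by rewrite mulrBr mulr1 (one_P H) subr0.
  by apply: dinj; rewrite /= /dv /= mulrACA e.
rewrite /fmap; congr (_, _).
  by rewrite mul1r (g_x0 H).
by apply: dinj; rewrite /= /dv /= mul1r.
Qed.

HB.instance Definition _ := GRing.isZmodMorphism.Build R ('Z_2 * D)%type fmap fmapB.
HB.instance Definition _ := GRing.isMultiplicative.Build R ('Z_2 * D)%type fmap fmapM.

Definition ginv (p : ('Z_2 * D)%type) : R := (if p.1 == 0 then 0 else x) + dv p.2.

Lemma fmap_bij : bijective fmap.
Proof.
exists ginv.
  move=> r; rewrite /ginv /fmap /=.
  have [] := g_two H r => e; rewrite e ?eqxx /= ?(negbTE (g_x0 H)) /=.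
    by rewrite add0r mulrBr mulr1 e subr0.
  by rewrite mulrBr mulr1 e addrC subrK.
move=> [[[|[|n]] Hn] d]; rewrite /ginv /fmap /=.
- rewrite add0r; congr (_, _).
    by rewrite dvP eqxx; apply: val_inj.
  by apply: dinj; rewrite /= mulrBr mulr1 dvP subr0.
- congr (_, _).
    rewrite mulrDl dvP addr0 (g_idem H) (g_x0 H); apply: val_inj => //.
  apply: dinj; rewrite /= mulrDl mulrBr mulr1 (g_idem H) subrr add0r.
  by rewrite mulrBr mulr1 dvP subr0.
- by [].
Qed.

End Map.

Lemma iso_exists (R : comPzRingType) (x : R) (H : good x) :
  exists (D : idomainType) (f : {rmorphism R -> ('Z_2 * D)%type}), bijective f.
Proof. by exists (Dty H), (fmap H); exact: fmap_bij. Qed.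

Theorem proposition3p3 (R : comPzRingType) :
  gamma_t_is R 2 ->
  ~ (exists (D : idomainType) (f : {rmorphism R -> ('Z_2 * D)%type}), bijective f) ->
  gamma_is R 2.
Proof.
move=> [[st [Hu [Hsz [HX Hv]]]] Hlow] Hniso.
split.
  exists st; split => //; split => //; split => // v Hv' _; exact: Hv.
move=> s [Hs1 Hs2].
rewrite leqNgt; apply/negP => Hlt.
case E: (undup s) Hlt => [|y [|z t]] // _.
- case: st Hu Hsz HX {Hv} => [|a st'] // _ _ HX.
  have va : zdiv_star a by apply: HX; rewrite inE eqxx.
  have [w [ws _]] : exists w, (w \in s) /\ zd_adj a w.
    apply: Hs2 => //; by rewrite -mem_undup E.
  by move: ws; rewrite -mem_undup E.
- have mem : forall w, (w \in s) = (w == y) by move=> w; rewrite -mem_undup E inE.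
  have vy : zdiv_star y by apply: Hs1; rewrite mem.
  have key : forall v, zdiv_star v -> v != y -> v * y = 0.
    move=> v hv hne.
    have hn : ~ (v \in s) by rewrite mem; apply/negP.
    have [w [ws hw]] := Hs2 v hv hn.
    by move: ws; rewrite mem => /eqP <-.
  have [yy|yy] := eqVneq (y * y) 0.
    suff : (2 <= size (undup s))%N by rewrite E.
    apply: Hlow.
    split => // v hv; exists y; split; first by rewrite mem.
    have [->|hne] := eqVneq v y; first exact: yy.
    exact: key.
  exact: Hniso (iso_exists (good_of vy key yy)).
Qed.
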